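(* $\mathrm{add}_{\omega}^{*}(\mathcal{S}pl)=\omega_{1}$ and $\mathrm{cof}_{\omega}^{*}(\mathcal{S}pl)=\mathfrak{c}$.
   Context: For an infinite $A\subseteq\omega$, let $S(A)$ be the set of all $\sigma\in2^{<\omega}$ such that $\sigma$ is constant on $A\cap\mathrm{dom}(\sigma)$. The splitting ideal $\mathcal{S}pl$ is the ideal on $2^{<\omega}$ generated by the sets $S(A)$, $A\in[\omega]^{\omega}$. For an ideal $\mathcal{J}$: $\mathrm{add}_{\omega}^*(\mathcal{J})=\min\{|\mathcal{F}|:\mathcal{F}\subseteq\mathcal{J}$ and for every countable $\{X_{n}:n\in\omega\}\subseteq\mathcal{J}$ there is $A\in\mathcal{F}$ with $A\not\subseteq^{*}X_{n}$ for all $n\}$; $\mathrm{cof}_{\omega}^*(\mathcal{J})=\min\{|\mathcal{F}|:\mathcal{F}\subseteq[\mathcal{J}]^{\omega}$ and for every countable $\bar{A}\subseteq\mathcal{J}$ there is $\bar{F}\in\mathcal{F}$ such that every $A\in\bar{A}$ satisfies $A\subseteq^{*}F$ for some $F\in\bar{F}\}$. *)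

(* Defs.v *)
From mathcomp Require Import all_boot.
From mathcomp Require Import boolp classical_sets cardinality.
Set Implicit Arguments. Unset Strict Implicit. Unset Printing Implicit Defensive.
Local Open Scope classical_set_scope.

(* 2^{<omega} is represented by [seq bool]; sigma has domain {0,...,size sigma - 1}. *)
Notation bstr := (seq bool).

Definition S_of (A : set nat) : set bstr :=
  [set s | forall i j, (i < size s)%N -> (j < size s)%N -> A i -> A j ->
                       nth false s i = nth false s j].

(* The splitting ideal: the ideal generated by the S(A), A infinite, i.e.
   sets covered by finitely many S(A_k) with each A_k infinite. *)
Definition Spl : set (set bstr) :=
  [set X | exists (n : nat) (A : nat -> set nat),
     (forall k, (k < n)%N -> infinite_set (A k)) /\
     X `<=` \bigcup_(k in [set k | (k < n)%N]) S_of (A k)].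

Definition subset_star (X Y : set bstr) : Prop := finite_set (X `\` Y).

Definition add_star_family (J : set (set bstr)) (F : set (set bstr)) : Prop :=
  F `<=` J /\
  forall X : nat -> set bstr, (forall n, J (X n)) ->
    exists A, F A /\ forall n, ~ subset_star A (X n).

Definition cof_star_family (J : set (set bstr)) (FF : set (set (set bstr))) : Prop :=
  (forall Fb, FF Fb -> Fb `<=` J /\ countable Fb /\ infinite_set Fb) /\
  forall Ab : set (set bstr), Ab `<=` J -> countable Ab ->
    exists Fb, FF Fb /\ forall A, Ab A -> exists F, Fb F /\ subset_star A F.

(* |F| <= aleph_1 : F carries a well-order all of whose proper initial
   segments are countable. *)
Definition card_le_aleph1 T (F : set T) : Prop :=
  exists R : T -> T -> Prop,
    (forall x y, F x -> F y -> R x y \/ x = y \/ R y x) /\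
    (forall x y z, F x -> F y -> F z -> R x y -> R y z -> R x z) /\
    (forall x, F x -> ~ R x x) /\
    (forall B : set T, B `<=` F -> B !=set0 ->
        exists m, B m /\ forall y, B y -> ~ R y m) /\
    (forall x, F x -> countable [set y | F y /\ R y x]).

(* cardinality of the continuum: that of [set: nat -> bool] *)

(* Main.v *)
Require Import Defs.
From mathcomp Require Import all_boot.
From mathcomp Require Import boolp classical_sets cardinality.
From mathcomp Require Import wochoice finmap zify.
Local Open Scope classical_set_scope.
Local Open Scope card_scope.

Lemma bnd (f : nat -> nat) m : exists N, forall k, (k < m)%N -> (f k < N)%N.
Proof.
elim: m => [|m [N HN]]; first by exists 0.
exists (maxn N (f m).+1) => k; rewrite ltnS leq_eqVlt => /orP[/eqP->|/HN]; lia.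
Qed.

Lemma fin_bound (T : choiceType) (X : set T) (f : T -> nat) :
  finite_set X -> exists n, forall x, X x -> (f x < n)%N.
Proof.
move=> /finite_fsetP[Y ->]; exists (\max_(y <- Y) f y).+1 => x /= xY.
by rewrite ltnS; apply: leq_bigmax_seq.
Qed.

Lemma inf_nat (B : set nat) : infinite_set B -> forall M, exists q, B q /\ (M <= q)%N.
Proof.
move=> Binf M; apply: contra_notP Binf => H.
apply: (sub_finite_set (B:=`I_M)) => // q Bq /=.
rewrite ltnNge; apply/negP => Mq; apply: H; by exists q.
Qed.

Lemma unbounded_inf (T : choiceType) (X : set T) (f : T -> nat) :
  (forall M, exists x, X x /\ (M <= f x)%N) -> infinite_set X.
Proof.
move=> H /(@fin_bound _ _ f)[n Hn]; have [x [Xx]] := H n; have := Hn x Xx; lia.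
Qed.

Definition U (m : nat) (B : nat -> set nat) : set bstr :=
  \bigcup_(k in [set k | (k < m)%N]) S_of (B k).

Lemma KL (A : set nat) m (B : nat -> set nat) :
  (forall k, (k < m)%N -> infinite_set (B k)) ->
  (forall k, (k < m)%N -> exists2 p, B k p & ~ A p) ->
  ~ subset_star (S_of A) (U m B).
Proof.
move=> Binf Bout.
have /choice[p Hp] : forall k, exists q, (k < m)%N -> B k q /\ ~ A q.
  move=> k; have [km|km] := boolP (k < m)%N.
    by have [q ? ?] := Bout k km; exists q.
  by exists 0.
have [N0 HN0] := bnd p m.
have /choice[q Hq] : forall k, exists q, (k < m)%N -> B k q /\ (N0 <= q)%N.
  move=> k; have [km|km] := boolP (k < m)%N.
    by have [q [? ?]] := @inf_nat _ (Binf k km) N0; exists q.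
  by exists 0.
have [N1 HN1] := bnd q m.
pose P i := `[< exists2 k, (k < m)%N & i = p k >].
pose sig L := mkseq P L.
move=> fin.
have : infinite_set [set s | exists2 L, (N1 <= L)%N & s = sig L].
  apply: (@unbounded_inf _ _ size) => M; exists (sig (maxn M N1)); split.
    by exists (maxn M N1) => //; lia.
  rewrite size_mkseq; lia.
apply; apply: sub_finite_set fin => s [L NL ->]; split.
  move=> i j; rewrite size_mkseq => iL jL Ai Aj; rewrite !nth_mkseq //.
  have Pf : forall i', A i' -> P i' = false.
    move=> i' Ai'; apply/negP => /asboolP[k km E]; apply: (Hp k km).2.
    by rewrite -E.
  by rewrite !Pf.
move=> [k /= km] H.
have h1 := HN0 k km; have h2 := (Hq k km).2; have h3 := HN1 k km.
have pL : (p k < L)%N by lia.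
have qL : (q k < L)%N by lia.
have := H (p k) (q k); rewrite size_mkseq => /(_ pL qL (Hp k km).1 (Hq k km).1).
rewrite !nth_mkseq //.
have -> : P (p k) = true by apply/asboolP; exists k.
have -> : P (q k) = false.
  by apply/negP => /asboolP[k' k'm E]; have := HN0 k' k'm; lia.
by [].
Qed.
Arguments KL {A m B}.


Lemma subset_star_sub (X Y : set bstr) : X `<=` Y -> subset_star X Y.
Proof.
move=> XY; apply: (sub_finite_set _ (finite_set0 bstr)) => s [Xs nYs].
by apply: nYs; apply: XY.
Qed.

Lemma subset_star_trans_r (X Y Z : set bstr) :
  subset_star X Y -> Y `<=` Z -> subset_star X Z.
Proof.
move=> XY YZ; apply: sub_finite_set XY => s [Xs nZs]; split => // Ys.
by apply: nZs; apply: YZ.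
Qed.
Arguments subset_star_trans_r {X Y Z}.


Lemma KL' (A : set nat) m (B : nat -> set nat) :
  (forall k, (k < m)%N -> infinite_set (B k)) ->
  subset_star (S_of A) (U m B) -> exists2 k, (k < m)%N & B k `<=` A.
Proof.
move=> Binf H; apply: contrapT => nex; apply: (KL Binf) H => k km.
apply: contrapT => np; apply: nex; exists k => // p Bp.
by apply: contrapT => nAp; apply: np; exists p.
Qed.
Arguments KL' {A m B}.


Definition AD (x : nat -> bool) : set nat := range (fun n => choice.pickle (mkseq x n)).

Lemma AD_inf x : infinite_set (AD x).
Proof.
apply: (@unbounded_inf nat (AD x)
  (fun y => if @choice.unpickle (seq bool) y is Some s then size (s : seq bool) else 0%N)) => M.
exists (choice.pickle (mkseq x M)); split; first by exists M.
by rewrite choice.pickleK size_mkseq.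
Qed.

Lemma AD_sep x y (B : set nat) : infinite_set B -> B `<=` AD x -> B `<=` AD y -> x = y.
Proof.
move=> Binf Bx By; apply: funext => d; apply: contra_notP Binf => neq.
have [N HN] := bnd (fun n => choice.pickle (mkseq x n)) d.+1.
apply: (sub_finite_set (B := `I_N)) => // b Bb /=.
case: (Bx b Bb) => n _ Eb; case: (By b Bb) => n' _; rewrite -Eb => /(pcan_inj choice.pickleK) E.
have nn := congr1 size E; rewrite !size_mkseq in nn; subst n'.
apply: HN; rewrite ltnNge; apply/negP => dn; apply: neq.
by have := congr1 (fun s => nth false s d) E; rewrite /= !nth_mkseq.
Qed.
Arguments AD_sep {x y B}.


Definition SA x := S_of (AD x).

Lemma SA_inj : injective SA.
Proof.
move=> x y E.
have : subset_star (SA x) (U 1 (fun _ => AD y)).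
  by apply: subset_star_sub => s Hs; exists 0%N => //; move: Hs; rewrite E.
move=> /KL'[| k _ H]; first by move=> k _; apply: AD_inf.
by apply: (AD_sep (AD_inf y)).
Qed.

Lemma SA_Spl x : Spl (SA x).
Proof.
exists 1%N, (fun _ => AD x); split; first by move=> k _; apply: AD_inf.
by move=> s Hs; exists 0%N.
Qed.

Lemma countable_sub1 T (C : set T) : (forall x y, C x -> C y -> x = y) -> countable C.
Proof.
move=> H; case: (pselect (exists x, C x)) => [[x Cx]|nC].
  apply: (sub_countable (B := [set x])); last exact: countable1.
  by apply: subset_card_le => y Cy; apply: H.
have -> : C = set0 by apply/seteqP; split => y // Cy; apply: nC; exists y.
exact: countable0.
Qed.

Definition SAset (F : set bstr) := [set x | subset_star (SA x) F].

Lemma SAset_countable F : Spl F -> countable (SAset F).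
Proof.
move=> [m [B [Binf FU]]].
apply: (sub_countable (B := \bigcup_(k in `I_m) [set x | B k `<=` AD x])).
  apply: subset_card_le => x Hx.
  have := KL' Binf (subset_star_trans_r Hx FU) => -[k km H].
  by exists k.
apply: bigcup_countable => // k km; apply: countable_sub1 => x y Hx Hy.
exact: (AD_sep (Binf k km)).
Qed.

Lemma subc T (A B : set T) : A `<=` B -> countable B -> countable A.
Proof. by move=> AB; apply: sub_countable; apply: subset_card_le. Qed.

Lemma add_not_countable F : add_star_family Spl F -> ~ countable F.
Proof.
move=> [FS H] /countable_injP[f finj].
pose X n := xget set0 [set A | F A /\ f A = n].
have S0 : Spl set0.
  by exists 0%N, (fun _ => set0); split => // k.
have XS : forall n, Spl (X n).
  move=> n; have [[A [FA E]]|nP] := pselect (exists A, F A /\ f A = n).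
    have [FX _] := xgetPex set0 (ex_intro _ A (conj FA E) : exists A, [set A | F A /\ f A = n] A).
    exact: FS.
  by rewrite /X xgetPN // => A HA; apply: nP; exists A.
have [A [FA HA]] := H X XS.
have XA : X (f A) = A.
  have [FX EX] := xgetPex set0 (ex_intro _ A (conj FA erefl) : exists A', [set A' | F A' /\ f A' = f A] A').
  by apply: finj => //; apply: mem_set.
by apply: (HA (f A)); rewrite XA; apply: subset_star_sub.
Qed.

Definition R0 := proj1_sig (well_ordering_principle (nat -> bool)).
Lemma R0wo : well_order R0. Proof. exact: proj2_sig _. Qed.

Lemma R0min (B : set (nat -> bool)) : B !=set0 -> exists z, B z /\ forall w, B w -> R0 z w.
Proof.
move=> [x Bx]; have [|z [[zin lb] _]] := R0wo [pred w | `[< B w >]].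
  by exists x; rewrite inE; apply/asboolP.
exists z; split; first by move: zin; rewrite inE => /asboolP.
by move=> w Bw; apply: lb; rewrite inE; apply/asboolP.
Qed.

Lemma wc : wo_chain R0 predT.
Proof. by move=> A _; apply: R0wo. Qed.

Lemma R0tot x y : R0 x y || R0 y x.
Proof. exact: (wo_chainW wc). Qed.

Lemma R0anti x y : R0 x y -> R0 y x -> x = y.
Proof. by move=> h1 h2; apply: (wo_chain_antisymmetric wc) => //; rewrite h1 h2. Qed.
Arguments R0anti {x y}.


Lemma R0trans x y z : R0 x y -> R0 y z -> R0 x z.
Proof.
move=> h1 h2.
have [w [Hw min]] := R0min [set w | w = x \/ w = y \/ w = z] (ex_intro _ x (or_introl erefl)).
case: Hw => [E|[E|E]]; subst w.
- by apply: min; right; right.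
- by rewrite (R0anti h1 (min x (or_introl erefl))).
- by rewrite -(R0anti h2 (min y (or_intror (or_introl erefl)))).
Qed.
Arguments R0trans {x y z}.


Definition W x y := R0 x y /\ x <> y.

Lemma unc_T : ~ countable [set: nat -> bool].
Proof.
move=> /countable_injP[f finj].
pose g n := xget (fun _ => false) [set x | f x = n].
pose d n := ~~ g n n.
have E : g (f d) = d.
  apply: finj; rewrite ?inE //; try by apply: mem_set.
  exact: (xgetPex (fun _ => false) (ex_intro (fun x => f x = f d) d erefl)).
have E2 : g (f d) (f d) = ~~ g (f d) (f d) := congr1 (fun h => h (f d)) E.
by case: (g (f d) (f d)) E2.
Qed.

Definition I := [set x | countable [set y | W y x]].

Lemma I_unc : ~ countable I.
Proof.
move=> cI.
have [z nIz] : exists z, ~ I z.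
  apply: contrapT => H; apply: unc_T; apply: subc cI => x _.
  by apply: contrapT => nx; apply: H; exists x.
have [z0 [nI0 min0]] := R0min [set z | ~ I z] (ex_intro _ z nIz).
apply: nI0; rewrite /I /=; apply: subc cI => y [Ry ne].
apply: contrapT => nIy; apply: ne; apply: R0anti => //; exact: min0.
Qed.

Definition Fam := SA @` I.
Definition RF (Y Z : set bstr) := exists x y, Y = SA x /\ Z = SA y /\ W x y.

Lemma RF_SA a b : RF (SA a) (SA b) <-> W a b.
Proof.
split; last by move=> H; exists a, b.
by move=> [x [y [/SA_inj-> [/SA_inj-> H]]]].
Qed.

Lemma part1a : exists F, add_star_family Spl F /\ card_le_aleph1 F.
Proof.
exists Fam; split.
  split; first by move=> Y [a _ <-]; exact: SA_Spl.
  move=> X XS.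
  pose Bad := \bigcup_(n in [set: nat]) SAset (X n).
  have cB : countable Bad.
    by apply: bigcup_countable => // n _; exact: SAset_countable.
  have [a [Ia nBa]] : exists a, I a /\ ~ Bad a.
    apply: contrapT => H; apply: I_unc; apply: subc cB => a Ia.
    by apply: contrapT => nb; apply: H; exists a.
  exists (SA a); split; first by exists a.
  by move=> n Hn; apply: nBa; exists n.
exists RF; split; [|split; [|split; [|split]]].
- move=> Y Z [a _ <-] [b _ <-].
  case: (pselect (a = b)) => [->|ne]; first by right; left.
  have /orP[h|h] := R0tot a b; [left|right; right]; apply/RF_SA; split => //.
  by move=> E; apply: ne.
- move=> ? ? ? [a _ <-] [b _ <-] [c _ <-] /RF_SA [h1 n1] /RF_SA [h2 n2].
  apply/RF_SA; split; first exact: R0trans h1 h2.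
  move=> E; subst c; apply: n1; exact: R0anti h1 h2.
- by move=> ? [a _ <-] /RF_SA [_ n].
- move=> B BF [Y BY]; have [a _ Ea] := BF Y BY.
  have [a0 [Ca0 min]] := R0min [set a | B (SA a)] (ex_intro _ a (eq_ind_r B BY Ea)).
  exists (SA a0); split => // Y' BY'; have [b _ Eb] := BF Y' BY'.
  rewrite -Eb in BY' *; move/RF_SA => [h n]; apply: n; apply: R0anti h _.
  exact: min.
- move=> Y [a Ia <-].
  apply: (@subc _ _ (SA @` [set b | W b a])).
    by move=> Y' [[b _ <-] /RF_SA h]; exists b.
  exact: sub_countable (card_image_le _ _) Ia.
Qed.

Definition Fb (c : nat -> nat -> set nat) : set (set bstr) :=
  [set Wd | (exists n m, Wd = U m (c n)) \/ (exists n, Wd = [set nseq n false])].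
Definition codes := [set c : nat -> nat -> set nat | forall n k, infinite_set (c n k)].
Definition FF0 := Fb @` codes.

Lemma Spl0 : Spl set0.
Proof. by exists 0%N, (fun _ => set0); split => // k. Qed.

Lemma Spl_U m B : (forall k, (k < m)%N -> infinite_set (B k)) -> Spl (U m B).
Proof. by move=> H; exists m, B; split. Qed.

Lemma Spl_single n : Spl [set nseq n false].
Proof.
exists 1%N, (fun _ => [set i | (n <= i)%N]); split.
  move=> k _; apply: (@unbounded_inf nat _ id) => M; exists (maxn n M); split => /=; lia.
move=> s -> /=; exists 0%N => // i j; rewrite size_nseq /= => iL _ Ai; lia.
Qed.

Lemma Fb_countable c : countable (Fb c).
Proof.
pose g (p : nat * nat * bool) := if p.2 then U p.1.2 (c p.1.1) else [set nseq p.1.1 false].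
apply: (@subc _ _ (g @` setT)).
  by move=> Wd [[n [m ->]]|[n ->]]; [exists (n, m, true) | exists (n, 0%N, false)].
exact: sub_countable (card_image_le _ _) (countableP _).
Qed.

Lemma Fb_inf c : infinite_set (Fb c).
Proof.
apply: (@unbounded_inf _ _ (fun Wd => xget 0%N [set n | Wd (nseq n false)])) => M.
exists [set nseq M false]; split; first by right; exists M.
have -> : xget 0%N [set n | [set nseq M false] (nseq n false)] = M.
  apply: xget_unique => //= y E.
  by have := congr1 size E; rewrite !size_nseq.
by [].
Qed.

Lemma cof_FF0 : cof_star_family Spl FF0.
Proof.
split.
  move=> Fb0 [c cc <-]; split; [|split]; [|exact: Fb_countable|exact: Fb_inf].
  move=> Wd [[n [m ->]]|[n ->]]; [apply: Spl_U => k _; exact: cc | exact: Spl_single].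
move=> Ab AbS /countable_injP[f finj].
pose E n := xget set0 [set A | Ab A /\ f A = n].
have ES : forall n, Spl (E n).
  move=> n; have [[A [FA EA]]|nP] := pselect (exists A, Ab A /\ f A = n).
    have [FX _] := xgetPex set0 (ex_intro _ A (conj FA EA) : exists A, [set A | Ab A /\ f A = n] A).
    exact: AbS.
  by rewrite /E xgetPN //; [exact: Spl0 | move=> A HA; apply: nP; exists A].
have /choice[mB HmB] : forall n, exists mB : nat * (nat -> set nat),
    (forall k, (k < mB.1)%N -> infinite_set (mB.2 k)) /\ E n `<=` U mB.1 mB.2.
  by move=> n; have [m [B [H1 H2]]] := ES n; exists (m, B).
pose c n k := if (k < (mB n).1)%N then (mB n).2 k else setT.
have cc : codes c.
  move=> n k; rewrite /c; case: ifP => h; [exact: (HmB n).1 | exact: infinite_nat].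
exists (Fb c); split; first by exists c.
move=> A AbA.
have EA : E (f A) = A.
  have [FX EX] := xgetPex set0 (ex_intro _ A (conj AbA erefl) : exists A', [set A' | Ab A' /\ f A' = f A] A').
  by apply: finj => //; apply: mem_set.
exists (U (mB (f A)).1 (c (f A))); split; first by left; exists (f A), (mB (f A)).1.
apply: subset_star_sub => s As.
have := (HmB (f A)).2 s; rewrite EA => /(_ As) [k km Hk].
exists k => //; rewrite /c; case: ifP => //; move: km => /= -> //.
Qed.

Definition enc (c : nat -> nat -> set nat) : nat -> bool := fun p =>
  if @choice.unpickle (nat * nat * nat)%type p is Some (n, k, i) then `[< c n k i >] else false.

Lemma FF0_card : FF0 #<= [set: nat -> bool].
Proof.
apply: (card_le_trans (card_image_le Fb codes)).
apply/pcard_injP; exists enc => c1 c2 _ _ E.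
apply: funext => n; apply: funext => k; apply: funext => i.
have := congr1 (fun g => g (choice.pickle (n, k, i))) E.
rewrite /enc /= !choice.pickleK => Eb.
by apply: propext; apply: asbool_eq_equiv.
Qed.

Definition enc2 (z : nat -> nat -> bool) : nat -> bool := fun p =>
  if @choice.unpickle (nat * nat)%type p is Some (a, b) then z a b else false.

Lemma enc2_inj : injective enc2.
Proof.
move=> z1 z2 E; apply: funext => a; apply: funext => b.
have := congr1 (fun g => g (choice.pickle (a, b))) E.
by rewrite /enc2 /= !choice.pickleK.
Qed.

Lemma part2b FF : cof_star_family Spl FF -> [set: nat -> bool] #<= FF.
Proof.
move=> [FFp Hcov].
have /choice[Fbz HFbz] : forall z : nat -> nat -> bool, exists Fb0, FF Fb0 /\
    exists2 F, Fb0 F & subset_star (SA (enc2 z)) F.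
  move=> z.
  have Hs : [set SA (enc2 z)] `<=` Spl by move=> Y ->; exact: SA_Spl.
  have [Fb0 [FFb H]] := Hcov _ Hs (countable1 _).
  exists Fb0; split => //.
  by have [F [FbF sF]] := H _ erefl; exists F.
pose psi Fb0 := [set z | exists2 F, Fb0 F & subset_star (SA (enc2 z)) F].
have psic : forall Fb0, FF Fb0 -> countable (psi Fb0).
  move=> Fb0 FFb; have [FbS [Fbc _]] := FFp _ FFb.
  apply: (@subc _ _ (\bigcup_(F in Fb0) (enc2 @^-1` SAset F))).
    by move=> z [F FbF sF]; exists F.
  apply: bigcup_countable => // F FbF.
  have /countable_injP[g ginj] := @SAset_countable F (FbS F FbF).
  apply/countable_injP; exists (g \o enc2) => z1 z2 h1 h2 /= Eg.
  apply: enc2_inj; apply: (ginj _ _ _ _ Eg); rewrite in_setE;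
    [move: h1|move: h2]; rewrite in_setE; exact.
have /choice[iota Hiota] : forall Fb0, exists io : (nat -> nat -> bool) -> nat,
    FF Fb0 -> {in psi Fb0 &, injective io}.
  move=> Fb0; case: (pselect (FF Fb0)) => [h|h]; last by exists (fun _ => 0%N).
  by have /countable_injP[io Hio] := psic _ h; exists io.
pose nu z := iota (Fbz z) z.
have [n Hn] : exists n, forall x : nat -> bool, exists z, nu z = n /\ z n = x.
  apply: contrapT => H.
  have /choice[y Hy] : forall n, exists x : nat -> bool, forall z, nu z = n -> z n <> x.
    move=> n; apply: contrapT => H2; apply: H; exists n => x.
    apply: contrapT => H3; apply: H2; exists x => z E E2; apply: H3; by exists z.
  exact: (Hy (nu y) y erefl erefl).
have /choice[zx Hzx] := Hn.
apply/pcard_leP/injfunPex; exists (fun x => Fbz (zx x)).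
  by move=> x _; exact: (HFbz _).1.
move=> x1 x2 _ _ E.
have [h1 e1] := Hzx x1; have [h2 e2] := Hzx x2.
rewrite -e1 -e2; congr (_ n).
apply: (Hiota (Fbz (zx x1)) (HFbz _).1).
- by rewrite in_setE; exact: (HFbz _).2.
- by rewrite in_setE E; exact: (HFbz _).2.
- have : nu (zx x2) = nu (zx x1) by rewrite h1 h2.
  by rewrite /nu -E => ->.
Qed.

Theorem mainTheorem14 :
  (* add*_omega(Spl) = omega_1 *)
  ((exists F, add_star_family Spl F /\ card_le_aleph1 F) /\
   (forall F, add_star_family Spl F -> ~ countable F)) /\
  (* cof*_omega(Spl) = continuum *)
  ((exists FF, cof_star_family Spl FF /\ (FF #<= [set: nat -> bool])) /\
   (forall FF, cof_star_family Spl FF -> [set: nat -> bool] #<= FF)).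
Proof.
split; split.
- exact: part1a.
- exact: add_not_countable.
- by exists FF0; split; [exact: cof_FF0 | exact: FF0_card].
- exact: part2b.
Qed.
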